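(* Let $A\in\mathbb{C}^{m\times n}$ be such that $\mathrm{rank}(AA^{\sim})=\mathrm{rank}(A^{\sim}A)=\mathrm{rank}(A)$. Then for arbitrary nonnegative integers $k$ and $l$, $$A^{\mathfrak{m}}=(A^{\sim}A)^kA^{\sim}\left[(A^{\sim}A)^{k+l+1}A^{\sim}\right]^{(1)}(A^{\sim}A)^lA^{\sim},$$ where $\left[(A^{\sim}A)^{k+l+1}A^{\sim}\right]^{(1)}$ is any $\{1\}$-inverse of $(A^{\sim}A)^{k+l+1}A^{\sim}$.
   Context: For a positive integer $k$, the Minkowski metric matrix of order $k$ is $G_k=\mathrm{diag}(1,-I_{k-1})$ (with $G_1=(1)$). For $M\in\mathbb{C}^{p\times q}$, the Minkowski adjoint is $M^{\sim}=G_qM^*G_p$, where $M^*$ is the conjugate transpose. The Minkowski inverse of $A\in\mathbb{C}^{m\times n}$, denoted $A^{\mathfrak{m}}$, is the (unique) matrix $X\in\mathbb{C}^{n\times m}$ with $AXA=A$, $XAX=X$, $(AX)^{\sim}=AX$, $(XA)^{\sim}=XA$; it exists under the stated rank hypothesis. A $\{1\}$-inverse of $M$ is any $M^{(1)}$ with $MM^{(1)}M=M$; $(A^{\sim}A)^0=I_n$. *)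

(* Defs.v *)
From HB Require Import structures.
From mathcomp Require Import all_boot all_order all_algebra.
Set Implicit Arguments. Unset Strict Implicit. Unset Printing Implicit Defensive.
Import Order.TTheory GRing.Theory Num.Theory.
Local Open Scope ring_scope.

(* Complex scalars: any numeric closed field C (e.g. the complex numbers),
   with conjugation z^* . *)

Definition minkG (C : numClosedFieldType) (k : nat) : 'M[C]_k :=
  \matrix_(i, j) (if i == j then (if nat_of_ord i == 0%N then 1 else -1) else 0).

Definition ctrmx (C : numClosedFieldType) (p q : nat) (M : 'M[C]_(p, q)) : 'M[C]_(q, p) :=
  map_mx Num.conj M^T.

Definition madj (C : numClosedFieldType) (p q : nat) (M : 'M[C]_(p, q)) : 'M[C]_(q, p) :=
  minkG C q *m ctrmx M *m minkG C p.

Definition is_minkowski_inverse (C : numClosedFieldType) (m n : nat)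
  (A : 'M[C]_(m, n)) (X : 'M[C]_(n, m)) : Prop :=
  [/\ A *m X *m A = A, X *m A *m X = X,
      madj (A *m X) = A *m X & madj (X *m A) = X *m A].

Definition is_inverse1 (C : numClosedFieldType) (p q : nat)
  (M : 'M[C]_(p, q)) (Y : 'M[C]_(q, p)) : Prop := M *m Y *m M = M.

(* Main.v *)
Require Import Defs.
From HB Require Import structures.
From mathcomp Require Import all_boot all_order all_algebra.
From mathcomp Require Import zify.
Import Order.TTheory GRing.Theory Num.Theory.
Local Open Scope ring_scope.

Lemma minkG2 (C : numClosedFieldType) k : minkG C k *m minkG C k = 1%:M.
Proof.
apply/matrixP => i j; rewrite !mxE (bigD1 i) //= big1 ?addr0.
  rewrite !mxE eqxx; case: (i =P j) => [->|/eqP ne]; rewrite ?eqxx.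
    by case: (_ == _); rewrite ?mulr1 ?mulrNN ?mulr1.
  by rewrite mulr0; case: eqP ne.
by move=> h /negbTE hi; rewrite !mxE eq_sym hi mul0r.
Qed.

Lemma ctrmxM (C : numClosedFieldType) p q r (M : 'M[C]_(p,q)) (N : 'M[C]_(q,r)) :
  ctrmx (M *m N) = ctrmx N *m ctrmx M.
Proof. by rewrite /ctrmx trmx_mul map_mxM. Qed.

Lemma ctrmxK (C : numClosedFieldType) p q (M : 'M[C]_(p,q)) : ctrmx (ctrmx M) = M.
Proof. by apply/matrixP => i j; rewrite !mxE conjCK. Qed.

Lemma ctrmxG (C : numClosedFieldType) k : ctrmx (minkG C k) = minkG C k.
Proof.
apply/matrixP => i j; rewrite !mxE.
have [->|ne] := eqVneq i j; rewrite ?eqxx; last by rewrite rmorph0.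
by case: (nat_of_ord j == 0)%N; rewrite ?rmorph1 ?rmorphN1.
Qed.

Lemma madjM (C : numClosedFieldType) p q r (M : 'M[C]_(p,q)) (N : 'M[C]_(q,r)) :
  madj (M *m N) = madj N *m madj M.
Proof.
rewrite /madj ctrmxM !mulmxA -[_ *m minkG C q *m minkG C q]mulmxA minkG2 mulmx1 //.
Qed.

Lemma madjK (C : numClosedFieldType) p q (M : 'M[C]_(p,q)) : madj (madj M) = M.
Proof.
rewrite /madj !ctrmxM ctrmxK !ctrmxG !mulmxA minkG2 mul1mx -mulmxA minkG2 mulmx1 //.
Qed.

Lemma pow_comm (C : fieldType) p q (X : 'M[C]_(p,q)) (Y : 'M[C]_(q,p)) j :
  (X *m Y) ^+ j *m X = X *m (Y *m X) ^+ j.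
Proof.
elim: j => [|j IH]; first by rewrite !expr0 mul1mx mulmx1.
by rewrite !exprSr -!mulmxE -mulmxA -(mulmxA X Y X) mulmxA IH -mulmxA.
Qed.

Lemma F2 (C : fieldType) m n (A : 'M[C]_(m,n)) (S : 'M[C]_(n,m)) Z Z'
  (h2 : A = (A *m S) *m Z) (h4 : S = (S *m A) *m Z') j :
  exists R : 'M[C]_m, (S *m A) ^+ j *m S *m R = S.
Proof.
have h0 : S *m A *m S *m (Z *m Z') = S.
  by rewrite [RHS]h4 {2}h2 !mulmxA.
elim: j => [|j [R hR]]; first by exists 1%:M; rewrite expr0 mul1mx mulmx1.
exists (Z *m Z' *m R); rewrite exprSr -mulmxE.
have -> : (S *m A)^+j *m (S *m A) *m S *m (Z *m Z' *m R) =
  (S *m A)^+j *m (S *m A *m S *m (Z *m Z')) *m R by rewrite !mulmxA.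
by rewrite h0.
Qed.

Lemma F1 (C : fieldType) m n (A : 'M[C]_(m,n)) (S : 'M[C]_(n,m)) W V
  (h1 : A = W *m (S *m A)) (h3 : S = V *m (A *m S)) j :
  exists L : 'M[C]_n, L *m ((S *m A) ^+ j *m S) = S.
Proof.
have h0 : V *m W *m (S *m A) *m S = S.
  have -> : V *m W *m (S *m A) *m S = V *m (W *m (S *m A)) *m S by rewrite !mulmxA.
  by rewrite -h1 -mulmxA -h3.
elim: j => [|j [L hL]]; first by exists 1%:M; rewrite expr0 mul1mx mul1mx.
exists (L *m (V *m W)); rewrite exprS -mulmxE.
have -> : L *m (V *m W) *m ((S *m A) *m (S *m A)^+j *m S) =
   L *m (V *m W *m (S *m A) *m S *m (A *m S)^+j).
  by rewrite -[_ *m _ ^+ j *m S]mulmxA pow_comm !mulmxA.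
by rewrite h0 -pow_comm hL.
Qed.

Lemma F3 (C : fieldType) m n (A : 'M[C]_(m,n)) (S : 'M[C]_(n,m)) Z Z'
  (h2 : A = (A *m S) *m Z) (h4 : S = (S *m A) *m Z') j :
  exists R : 'M[C]_n, A *m (S *m A) ^+ j *m R = A.
Proof.
have h0 : A *m (S *m A) *m (Z' *m Z) = A.
  have -> : A *m (S *m A) *m (Z' *m Z) = A *m (S *m A *m Z') *m Z by rewrite !mulmxA.
  by rewrite -h4 -h2.
elim: j => [|j [R hR]]; first by exists 1%:M; rewrite expr0 mulmx1 mulmx1.
exists (Z' *m Z *m R); rewrite exprSr -mulmxE.
have -> : A *m ((S *m A)^+j *m (S *m A)) *m (Z' *m Z *m R) =
   (A *m S)^+j *m (A *m (S *m A) *m (Z' *m Z)) *m R.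
  by rewrite !mulmxA -pow_comm ?mulmxA.
by rewrite h0 pow_comm hR.
Qed.

Arguments madjM {C p q r}.
Arguments madjK {C p q}.
Arguments pow_comm {C p q}.
Arguments F1 {C m n A S W V}.
Arguments F2 {C m n A S Z Z'}.
Arguments F3 {C m n A S Z Z'}.

Lemma core (C : fieldType) m n (A : 'M[C]_(m,n)) (S : 'M[C]_(n,m)) W Z V Z'
  (h1 : A = W *m (S *m A)) (h2 : A = (A *m S) *m Z)
  (h3 : S = V *m (A *m S)) (h4 : S = (S *m A) *m Z') k l (Y : 'M[C]_(m,n)) B E
  (hB : B = (S *m A) ^+ (k + l + 1) *m S) (hY : B *m Y *m B = B)
  (hE : E = (S *m A) ^+ k *m S *m Y *m (S *m A) ^+ l *m S) :
  [/\ A *m E *m A = A, E *m A *m E = E, E *m A *m S = S & S *m A *m E = S].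
Proof.
have T1 : (S *m A) ^+ (l + 1) *m E = (S *m A) ^+ l *m S.
  have [R hR] := F2 h2 h4 (k + 1).
  have eBR : B *m R = (S *m A) ^+ l *m S.
    rewrite hB (_ : (k + l + 1 = l + (k + 1))%N); last by lia.
    rewrite exprD -mulmxE.
    have -> : (S *m A) ^+ l *m (S *m A) ^+ (k + 1) *m S *m R =
      (S *m A) ^+ l *m ((S *m A) ^+ (k + 1) *m S *m R) by rewrite !mulmxA.
    by rewrite hR.
  rewrite -eBR -[in RHS]hY -[B *m Y *m B *m R]mulmxA eBR hE hB.
  rewrite (_ : (k + l + 1 = l + 1 + k)%N); last by lia.
  by rewrite (exprD _ (l + 1) k) -mulmxE !mulmxA.
have T2 : E *m A *m (S *m A) ^+ k *m S = (S *m A) ^+ k *m S.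
  have [L hL] := F1 h1 h3 (l + 1).
  have eLB : L *m B = (S *m A) ^+ k *m S.
    rewrite hB (_ : (k + l + 1 = l + 1 + k)%N); last by lia.
    rewrite (exprD _ (l + 1) k) -mulmxE -(mulmxA ((S *m A) ^+ (l + 1))) (pow_comm S A k).
    have -> : L *m ((S *m A) ^+ (l + 1) *m (S *m (A *m S) ^+ k)) =
      L *m ((S *m A) ^+ (l + 1) *m S) *m (A *m S) ^+ k by rewrite !mulmxA.
    by rewrite hL.
  transitivity (L *m B *m Y *m B).
    rewrite eLB hE hB (_ : (k + l + 1 = l + (1 + k))%N); last by lia.
    by rewrite exprD exprS -!mulmxE !mulmxA.
  by rewrite -eLB -[in RHS]hY !mulmxA.
have T3 : E *m A *m E = E.
  by rewrite {2}hE !mulmxA T2 hE.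
have T4 : A *m E *m A = A.
  have [R hR] := F3 h2 h4 (k + 1).
  have h : E *m A *m (S *m A) ^+ (k + 1) = (S *m A) ^+ (k + 1).
    by rewrite addn1 exprSr -mulmxE !mulmxA T2.
  rewrite -{2}hR.
  transitivity (A *m (E *m A *m (S *m A) ^+ (k + 1)) *m R); first by rewrite !mulmxA.
  by rewrite h hR.
split => //.
  have [R hR] := F2 h2 h4 k.
  by rewrite -{1}hR !mulmxA T2 hR.
have [L hL] := F1 h1 h3 l.
rewrite -{1}hL.
transitivity (L *m ((S *m A) ^+ (l + 1) *m E)); first by rewrite addn1 exprSr -mulmxE !mulmxA.
by rewrite T1 hL.
Qed.

Arguments core {C m n A S W Z V Z'}.

Lemma proj_eq (C : fieldType) p r s (P1 P2 : 'M[C]_p) (K : 'M[C]_(r,p))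
  (L : 'M[C]_(p,s)) R1 U2 :
  P1 = R1 *m K -> K *m P2 = K -> P2 = L *m U2 -> P1 *m L = L -> P1 = P2.
Proof.
move=> e1 e2 e3 e4; transitivity (P1 *m P2); first by rewrite e1 -mulmxA e2.
by rewrite {1}e3 mulmxA e4 -e3.
Qed.

Arguments proj_eq {C p r s P1 P2}.

Theorem theorem8p1 (C : numClosedFieldType) (m n : nat) (A : 'M[C]_(m, n))
  (hm : (0 < m)%N) (hn : (0 < n)%N)
  (hrk1 : \rank (A *m madj A) = \rank A)
  (hrk2 : \rank (madj A *m A) = \rank A)
  (k l : nat) (Y : 'M[C]_(m, n))
  (hY : is_inverse1 (((madj A *m A) ^+ (k + l + 1)) *m madj A) Y) :
  let E := (madj A *m A) ^+ k *m madj A *m Y *m (madj A *m A) ^+ l *m madj A in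
  is_minkowski_inverse A E /\ (forall X, is_minkowski_inverse A X -> X = E).
Proof.
move=> E.
have [W hW] : exists W, A = W *m (madj A *m A).
  apply/submxP; have h := mxrank_leqif_eq (submxMl (madj A) A).
  move: h.2; rewrite hrk2 eqxx => /esym/andP[_ ->] //.
have [D hD] : exists D, A^T = D *m ((madj A)^T *m A^T).
  apply/submxP; have h := mxrank_leqif_eq (submxMl (madj A)^T A^T).
  move: h.2; rewrite -trmx_mul !mxrank_tr hrk1 eqxx => /esym/andP[_ ->] //.
have hZ : A = (A *m madj A) *m D^T.
  by apply: (can_inj (@trmxK _ _ _)); rewrite {1}hD (trmx_mul (A *m madj A)) trmxK (trmx_mul A (madj A)).
have h3 : madj A = madj D^T *m (A *m madj A) by rewrite {1}hZ madjM (madjM A) madjK.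
have h4 : madj A = (madj A *m A) *m madj W by rewrite {1}hW madjM (madjM (madj A)) madjK.
have hE : E = (madj A *m A) ^+ k *m madj A *m Y *m (madj A *m A) ^+ l *m madj A by [].
have [AEA EAE EAS SAE] := core hW hZ h3 h4 k l Y _ E erefl hY hE.
have hEA : madj (E *m A) = E *m A.
  apply/esym/(proj_eq A (madj A) E (madj E)) => //.
  - by have h := congr1 (@madj C _ _) EAS; rewrite (madjM (E *m A)) madjK in h.
  - by rewrite madjM.
have hAE : madj (A *m E) = A *m E.
  apply/esym/(proj_eq (madj A) A
    (A *m ((madj A *m A) ^+ k *m madj A *m Y *m (madj A *m A) ^+ l))
    (madj ((madj A *m A) ^+ k *m madj A *m Y *m (madj A *m A) ^+ l) *m madj A)) => //.
  - by rewrite hE !mulmxA.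
  - by have h := congr1 (@madj C _ _) AEA; rewrite (madjM (A *m E)) in h.
  - by rewrite hE (madjM A) (madjM _ (madj A)) madjK -mulmxA.
split; first by split.
move=> X [hx1 hx2 hx3 hx4].
have sA1 : madj A *m (A *m E) = madj A.
  by rewrite -[in RHS]AEA madjM hAE.
have sA2 : X *m A *m madj A = madj A.
  have h := congr1 (@madj C _ _) hx1; rewrite -mulmxA madjM hx4 in h; exact h.
have eX : X = X *m A *m E.
  transitivity (X *m madj (A *m X)); first by rewrite hx3 mulmxA hx2.
  rewrite madjM -sA1.
  transitivity (X *m (madj X *m madj A) *m (A *m E)); first by rewrite !mulmxA.
  by rewrite -madjM hx3 !mulmxA hx2.
have eE : E = X *m A *m E.
  transitivity (madj (E *m A) *m E); first by rewrite hEA EAE.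
  rewrite madjM -sA2.
  transitivity (X *m A *m (madj A *m madj E) *m E); first by rewrite !mulmxA.
  rewrite -madjM hEA.
  transitivity (X *m A *m (E *m A *m E)); first by rewrite !mulmxA.
  by rewrite EAE.
by rewrite eX -eE.
Qed.
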